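(* For every \textsc{Set Once Strip Cover} instance $(x,b)$, the \textsc{RoundRobin} algorithm produces a valid schedule with lifetime $\mathrm{RR}(x,b)=\sum_{i=1}^n b_i/r_i$, where $r_i=\max\{x_i,1-x_i\}$, and $\mathrm{RR}(x,b)\ge \frac{2}{3}\,\mathrm{Opt}(x,b)$, where $\mathrm{Opt}(x,b)$ is the optimal lifetime of $(x,b)$. That is, \textsc{RoundRobin} is a $\frac{3}{2}$-approximation algorithm for \textsc{Set Once Strip Cover}.
   Context: \textsc{Set Once Strip Cover}: An instance is a pair $(x,b)$, where $x=(x_1,\ldots,x_n)\in[0,1]^n$ with $x_1\le\cdots\le x_n$ are sensor locations and $b=(b_1,\ldots,b_n)$, $b_i\ge 0$ rational, are battery charges. A schedule is a pair $(\rho,\tau)$ with $\rho\in[0,1]^n$ (radii) and $\tau\in[0,\infty)^n$ (activation times), each set once. Sensor $i$ covers the interval $[x_i-\rho_i,x_i+\rho_i]$ during the time interval $[\tau_i,\tau_i+b_i/\rho_i]$ and nothing otherwise (a sensor with $\rho_i=0$ covers nothing). A point $(u,t)$ is covered if $u\in[x_i-\rho_i,x_i+\rho_i]$ and $t\in[\tau_i,\tau_i+b_i/\rho_i]$ for some $i$. The lifetime of a schedule is the maximum $T$ such that every $(u,t)\in[0,1]\times[0,T]$ is covered; $\mathrm{Opt}(x,b)$ is the maximum lifetime over all schedules. The \textsc{RoundRobin} algorithm sets $\rho_i=r_i=\max\{x_i,1-x_i\}$ and $\tau_i=\sum_{j=1}^{i-1}b_j/\rho_j$ for every $i$, so that the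 sensors take turns each covering all of $[0,1]$. *)

(* Defs.v *)
From HB Require Import structures.
From mathcomp Require Import all_boot all_order all_algebra.
From mathcomp Require Import all_classical all_reals.
Set Implicit Arguments. Unset Strict Implicit. Unset Printing Implicit Defensive.
Import Order.TTheory GRing.Theory Num.Theory.
Local Open Scope ring_scope.
Local Open Scope classical_set_scope.

Section SetOnceStripCover.
Variable R : realType.
Variable n : nat.

Definition instance (x : 'I_n -> R) (b : 'I_n -> rat) : Prop :=
  (forall i, 0 <= x i <= 1) /\
  (forall i j : 'I_n, (i <= j)%N -> x i <= x j) /\
  (forall i, 0 <= b i).

Definition schedule (rho tau : 'I_n -> R) : Prop :=
  (forall i, 0 <= rho i <= 1) /\ (forall i, 0 <= tau i).

Definition covers (x : 'I_n -> R) (b : 'I_n -> rat) (rho tau : 'I_n -> R)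
    (i : 'I_n) (u t : R) : Prop :=
  0 < rho i /\ x i - rho i <= u <= x i + rho i /\
  tau i <= t <= tau i + ratr (b i) / rho i.

Definition covered x b rho tau (u t : R) : Prop :=
  exists i, covers x b rho tau i u t.

Definition covers_upto x b rho tau (T : R) : Prop :=
  forall u t, 0 <= u <= 1 -> 0 <= t <= T -> covered x b rho tau u t.

(* lifetime = maximum T >= 0 with [0,1]x[0,T] covered (as a supremum;
   the set is nonempty-or-empty, bounded, and closed, so this is the max
   when it exists, and 0 when nothing is covered) *)
Definition lifetime x b rho tau : R :=
  sup [set T : R | 0 <= T /\ covers_upto x b rho tau T].

Definition Opt x b : R :=
  sup [set L : R | exists rho tau, schedule rho tau /\ L = lifetime x b rho tau].

Definition rr (x : 'I_n -> R) (i : 'I_n) : R := Num.max (x i) (1 - x i).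

Definition rr_tau (x : 'I_n -> R) (b : 'I_n -> rat) (i : 'I_n) : R :=
  \sum_(j < n | (j < i)%N) ratr (b j) / rr x j.

Definition RR (x : 'I_n -> R) (b : 'I_n -> rat) : R :=
  \sum_(i < n) ratr (b i) / rr x i.

End SetOnceStripCover.

(* Main.v *)
Require Import Defs.
From HB Require Import structures.
From mathcomp Require Import all_boot all_order all_algebra.
From mathcomp Require Import all_classical all_reals.
From mathcomp Require Import ring lra.
Import Order.TTheory GRing.Theory Num.Theory.
Local Open Scope ring_scope.

Section S.
Variable R : realType.
Ltac fside := repeat (apply/andP; split); try done; apply/negP => /eqP ?; lra.
Definition Gf (s : R) : R := if s <= 2^-1 then s / (2 - s) else 2/3 - (1 - s)/(1 + s).

Lemma Gf_mono (s t : R) : s <= t -> Gf s <= Gf t.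
Proof.
move=> st; rewrite /Gf.
case: (lerP s (2^-1)) => hs; case: (lerP t (2^-1)) => ht.
- rewrite -subr_ge0.
  have -> : t / (2 - t) - s / (2 - s) = 2 * (t - s) / ((2 - t) * (2 - s)).
    by field; fside.
  apply: divr_ge0; [nra|nra].
- rewrite -subr_ge0.
  have -> : 2 / 3 - (1 - t) / (1 + t) - s / (2 - s) =
     ((4 * t - 2) * (2 - s) + (2 - 4 * s) * (1 + t)) / (3 * (1 + t) * (2 - s)).
    by field; fside.
  apply: divr_ge0; [nra|nra].
- lra.
- rewrite -subr_ge0.
  have -> : 2 / 3 - (1 - t) / (1 + t) - (2 / 3 - (1 - s) / (1 + s)) =
     2 * (t - s) / ((1 + t) * (1 + s)).
    by field; fside.
  apply: divr_ge0; [nra|nra].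
Qed.

Lemma Gf0 : Gf 0 = 0.
Proof. by rewrite /Gf ifT ?mul0r // invr_ge0 ler0n. Qed.
Lemma Gf1 : Gf 1 = 2/3.
Proof. rewrite /Gf ifF; last by apply/negbTE; rewrite -ltNge; lra. by rewrite subrr mul0r subr0. Qed.

Lemma Gf_sym (s : R) : Gf (1 - s) = 2/3 - Gf s.
Proof.
rewrite /Gf; case: (lerP (1 - s) (2^-1)) => h1; case: (lerP s (2^-1)) => h2.
- have -> : s = 2^-1 by lra. by field.
- field; fside.
- field; fside.
- lra.
Qed.

Lemma GfL {s : R} : s <= 2^-1 -> Gf s = s / (2 - s).
Proof. by move=> h; rewrite /Gf h. Qed.
Lemma GfR {s : R} : 2^-1 < s -> Gf s = 2/3 - (1 - s) / (1 + s).
Proof. by move=> h; rewrite /Gf leNgt h. Qed.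

Lemma core (a b : R) : a < b -> 0 <= a + b -> a + b <= 1 ->
  Gf (Num.min b 1) - Gf (Num.max a 0) <= (b - a) / (2 - a - b).
Proof.
move=> hab h0 h1.
case: (lerP 0 a) => ha.
- case: (lerP b 1) => hb1; last by lra.
  rewrite (@GfL a); last by lra.
  have [hb|hb] := lerP b (2^-1).
  + rewrite (GfL hb) -subr_ge0.
    have -> : (b - a) / (2 - a - b) - (b / (2 - b) - a / (2 - a)) =
      a * b * (b - a) / ((2 - a - b) * (2 - b) * (2 - a)) by field; fside.
    by apply: divr_ge0; (repeat apply: mulr_ge0); lra.
  + rewrite (GfR hb) -subr_ge0.
    have -> : (b - a) / (2 - a - b) - (2/3 - (1 - b) / (1 + b) - a / (2 - a)) =
      (4 * (1 - 2 * b)^+2 + 3 * a * (2 * b - 1) * (1 - b) + a * (1 - b - a) * (5 * b - 1))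
       / (3 * (2 - a - b) * (1 + b) * (2 - a)) by field; fside.
    apply: divr_ge0; last by (repeat apply: mulr_ge0); lra.
    have t1 : 0 <= 3 * a * (2 * b - 1) * (1 - b) by (repeat apply: mulr_ge0); lra.
    have t2 : 0 <= a * (1 - b - a) * (5 * b - 1) by (repeat apply: mulr_ge0); lra.
    have t3 : 0 <= (1 - 2 * b)^+2 by apply: sqr_ge0.
    lra.
- rewrite Gf0 subr0.
  have [hb|hb] := lerP b (2^-1).
  + case: (lerP b 1) => hb1; last by lra.
    rewrite (GfL hb) -subr_ge0.
    have -> : (b - a) / (2 - a - b) - b / (2 - b) =
      2 * (- a) * (1 - b) / ((2 - a - b) * (2 - b)) by field; fside.
    by apply: divr_ge0; (repeat apply: mulr_ge0); lra.
  case: (lerP b 1) => hb1.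
  + rewrite (GfR hb) -subr_ge0.
    have -> : (b - a) / (2 - a - b) - (2/3 - (1 - b) / (1 + b)) =
      (2 * (1 - 2 * b)^+2 + 2 * (- a) * (2 - b)) / (3 * (2 - a - b) * (1 + b)) by field; fside.
    apply: divr_ge0; last by (repeat apply: mulr_ge0); lra.
    have t3 : 0 <= (1 - 2 * b)^+2 by apply: sqr_ge0.
    have t4 : 0 <= (- a) * (2 - b) by apply: mulr_ge0; lra.
    lra.
  + rewrite Gf1 -subr_ge0.
    have -> : (b - a) / (2 - a - b) - 2/3 = (5 * b - a - 4) / (3 * (2 - a - b)) by field; fside.
    apply: divr_ge0; lra.
Qed.

Lemma interval_bound (x rho : R) : 0 <= x <= 1 -> 0 < rho ->
  Gf (Num.min (x + rho) 1) - Gf (Num.max (x - rho) 0) <= rho / Num.max x (1 - x).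
Proof.
move=> /andP [hx0 hx1] hr.
case: (lerP x (1 - x)) => hx.
- have -> : rho / (1 - x) = ((x + rho) - (x - rho)) / (2 - (x - rho) - (x + rho)) by field; fside.
  apply: core; lra.
- have e1 : Num.min (x + rho) 1 = 1 - Num.max ((1 - x) - rho) 0.
    by case: (lerP (x + rho) 1) => ?; case: (lerP 0 (1 - x - rho)) => ?; lra.
  have e2 : Num.max (x - rho) 0 = 1 - Num.min ((1 - x) + rho) 1.
    by case: (lerP 0 (x - rho)) => ?; case: (lerP (1 - x + rho) 1) => ?; lra.
  rewrite e1 e2 !Gf_sym.
  have -> : rho / x = (((1 - x) + rho) - ((1 - x) - rho)) / (2 - ((1 - x) - rho) - ((1 - x) + rho)) by field; fside.
  have := @core ((1 - x) - rho) ((1 - x) + rho).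
  move=> H; have := H ltac:(lra) ltac:(lra) ltac:(lra). lra.
Qed.

Definition pos (z : R) := Num.max z 0.
Lemma pos_id z : 0 <= z -> pos z = z.
Proof. by rewrite /pos; case: (lerP 0 z) => h1 h2 //; lra. Qed.
Lemma pos0 z : z <= 0 -> pos z = 0.
Proof. by rewrite /pos; case: (lerP 0 z) => h1 h2 //; lra. Qed.
Lemma pos_ge0 z : 0 <= pos z.
Proof. by rewrite /pos; case: (lerP 0 z) => h1 //; lra. Qed.

Section Gen.
Variable G : R -> R.
Hypothesis Gm : forall s t, s <= t -> G s <= G t.

Lemma split_pos a b {lo p hi} : lo <= p -> p <= hi ->
  pos (G (Num.min b hi) - G (Num.max a lo)) =
  pos (G (Num.min b p) - G (Num.max a lo)) + pos (G (Num.min b hi) - G (Num.max a p)).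
Proof.
move=> hlp hph.
case: (lerP p a) => hpa.
- have -> : Num.max a lo = a by case: (lerP lo a) => ?; lra.
  rewrite (pos0 (G (Num.min b p) - G a)) ?add0r //.
  rewrite subr_le0; apply: Gm; case: (lerP b p) => ?; lra.
- case: (lerP b p) => hbp.
  + have -> : Num.min b hi = b by case: (lerP b hi) => ?; lra.
    rewrite (pos0 (G b - G p)) ?addr0 //.
    by rewrite subr_le0; apply: Gm; lra.
  + have h1 : Num.max a lo <= p by case: (lerP a lo) => ?; lra.
    have h2 : p <= Num.min b hi by case: (lerP b hi) => ?; lra.
    have g1 := Gm _ _ h1; have g2 := Gm _ _ h2.
    have g3 := Gm _ _ (le_trans h1 h2).
    rewrite !pos_id; lra.
Qed.

Variable I : finType.
Variables a b w : I -> R.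
Hypothesis w0 : forall i, 0 <= w i.

Definition covP lo hi := forall t, lo <= t <= hi -> 1 <= \sum_(i | (a i <= t) && (t <= b i)) w i.
Definition tot lo hi := \sum_i w i * pos (G (Num.min (b i) hi) - G (Num.max (a i) lo)).

Lemma tot_ge0 lo hi : 0 <= tot lo hi.
Proof. by apply: sumr_ge0 => i _; apply: mulr_ge0 => //; apply: pos_ge0. Qed.

Lemma tot_split {lo p hi} : lo <= p -> p <= hi -> tot lo hi = tot lo p + tot p hi.
Proof.
move=> h1 h2; rewrite /tot -big_split /=; apply: eq_bigr => i _.
by rewrite (split_pos (a i) (b i) (lo:=lo) h1 h2) mulrDr.
Qed.

Lemma noint lo hi : lo <= hi -> covP lo hi ->
  (forall i, ~~ ((lo < a i) && (a i < hi)) && ~~ ((lo < b i) && (b i < hi))) ->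
  G hi - G lo <= tot lo hi.
Proof.
move=> hlh hcov hno.
case: (lerP hi lo) => hl.
- have -> : hi = lo by lra.
  by rewrite subrr tot_ge0.
pose t := (lo + hi) / 2.
have ht : lo <= t <= hi by apply/andP; split; rewrite /t; lra.
have := hcov t ht.
set P := fun i => (a i <= t) && (t <= b i).
move=> hs.
rewrite /tot (bigID P) /=.
have hr : 0 <= \sum_(i | ~~ P i) w i * pos (G (Num.min (b i) hi) - G (Num.max (a i) lo)).
  by apply: sumr_ge0 => i _; apply: mulr_ge0 => //; apply: pos_ge0.
have -> : \sum_(i | P i) w i * pos (G (Num.min (b i) hi) - G (Num.max (a i) lo)) =
          \sum_(i | P i) w i * (G hi - G lo).
  apply: eq_bigr => i /andP [h1 h2].
  have := hno i; rewrite !negb_and -!leNgt => /andP [h3 h4].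
  have -> : Num.min (b i) hi = hi.
    case/orP: h4 => ?; case: (lerP (b i) hi) => ?; rewrite /t in h1 h2; lra.
  have -> : Num.max (a i) lo = lo.
    case/orP: h3 => ?; case: (lerP (a i) lo) => ?; rewrite /t in h1 h2; lra.
  by rewrite pos_id // subr_ge0; apply: Gm; lra.
rewrite -mulr_suml.
have hG : 0 <= G hi - G lo by rewrite subr_ge0; apply: Gm; lra.
have := ler_wpM2r hG hs; rewrite mul1r; lra.
Qed.

Definition Sset (f : I -> R) lo hi := [set i | (lo < f i) && (f i < hi)].
Definition cnt lo hi := (#|Sset a lo hi| + #|Sset b lo hi|)%N.

Lemma Sset_sub f {lo p hi} : lo <= p -> p <= hi ->
  Sset f lo p \subset Sset f lo hi /\ Sset f p hi \subset Sset f lo hi.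
Proof.
move=> h1 h2; split; apply/fintype.subsetP => i; rewrite !inE => /andP [h3 h4].
- have a1 : lo < f i by lra.
  have a2 : f i < hi by lra.
  by rewrite a1 a2.
- have a1 : lo < f i by lra.
  have a2 : f i < hi by lra.
  by rewrite a1 a2.
Qed.

Lemma Sset_proper f j {lo hi} : lo < f j -> f j < hi ->
  Sset f lo (f j) \proper Sset f lo hi /\ Sset f (f j) hi \proper Sset f lo hi.
Proof.
move=> h1 h2; have [s1 s2] := Sset_sub f (ltW h1) (ltW h2).
split; apply/fintype.properP; split => //; exists j; rewrite !inE ?h1 ?h2 ?ltxx ?andbF //.
Qed.

Lemma cnt_lt {p lo hi j} : lo < p -> p < hi -> (a j = p \/ b j = p) ->
  (cnt lo p < cnt lo hi)%N /\ (cnt p hi < cnt lo hi)%N.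
Proof.
move=> h1 h2 hj.
have [sa1 sa2] := Sset_sub a (ltW h1) (ltW h2).
have [sb1 sb2] := Sset_sub b (ltW h1) (ltW h2).
rewrite /cnt; case: hj => hj; subst p.
- have [pa1 pa2] := Sset_proper a j h1 h2.
  split; rewrite -addSn; apply: leq_add; by [apply: proper_card | apply: subset_leq_card].
- have [pb1 pb2] := Sset_proper b j h1 h2.
  split; rewrite -addnS; apply: leq_add; by [apply: proper_card | apply: subset_leq_card].
Qed.

Lemma cover_gen lo hi : lo <= hi -> covP lo hi -> G hi - G lo <= tot lo hi.
Proof.
suff H : forall k lo hi, (cnt lo hi <= k)%N -> lo <= hi -> covP lo hi -> G hi - G lo <= tot lo hi.
  by apply: H.
elim=> [|k IH] {}lo {}hi hk hlh hcov;
  (case: (boolP [exists i, ((lo < a i) && (a i < hi)) || ((lo < b i) && (b i < hi))]);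
   [move=> /existsP [j hj] | move=> hno; apply: noint => // i;
     move: hno; rewrite negb_exists => /forallP /(_ i); rewrite negb_or //]).
- exfalso; move: hk; rewrite leqn0 addn_eq0 !cards_eq0 => /andP [/eqP ha /eqP hb].
  case/orP: hj => hj.
  + have : j \in Sset a lo hi by rewrite inE.
    by rewrite ha inE.
  + have : j \in Sset b lo hi by rewrite inE.
    by rewrite hb inE.
- have step : forall p, lo < p -> p < hi -> (cnt lo p <= k)%N -> (cnt p hi <= k)%N ->
     G hi - G lo <= tot lo hi.
    move=> p h1 h2 c1 c2.
    rewrite (tot_split (ltW h1) (ltW h2)).
    have e1 := IH lo p c1 (ltW h1) (fun t ht => hcov t ltac:(move/andP: ht => [? ?]; apply/andP; split; lra)).
    have e2 := IH p hi c2 (ltW h2) (fun t ht => hcov t ltac:(move/andP: ht => [? ?]; apply/andP; split; lra)).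
    lra.
  case/orP: hj => /andP [h1 h2].
  + have [c1 c2] := cnt_lt (j:=j) h1 h2 (or_introl erefl).
    by apply: (step _ h1 h2); rewrite -ltnS; apply: leq_trans hk.
  + have [c1 c2] := cnt_lt (j:=j) h1 h2 (or_intror erefl).
    by apply: (step _ h1 h2); rewrite -ltnS; apply: leq_trans hk.
Qed.
End Gen.
End S.

Arguments pos {R}.
Arguments Gf {R}.
Section Main.
Variable R : realType.
Variable n : nat.
Implicit Types (x rho tau : 'I_n -> R) (bb : 'I_n -> rat).

Lemma pos_le (z q : R) : z <= q -> 0 <= q -> pos z <= q.
Proof. by rewrite /pos; case: (lerP 0 z) => h1 h2 h3 //; lra. Qed.

Lemma rr_ge {x i} : 0 <= x i <= 1 -> 2^-1 <= rr x i <= 1.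
Proof. move=> /andP [h0 h1]; rewrite /rr; case: (lerP (x i) (1 - x i)) => h; apply/andP; split; lra. Qed.

Definition act x bb rho tau t (i : 'I_n) : bool :=
  (0 < rho i) && (tau i <= t) && (t <= tau i + ratr (bb i) / rho i).

Lemma static x bb rho tau t : (forall i, 0 <= x i <= 1) ->
  (forall u, 0 <= u <= 1 -> covered x bb rho tau u t) ->
  2/3 <= \sum_(i | act x bb rho tau t i) rho i / rr x i.
Proof.
move=> hx hcov.
pose w := fun i => if act x bb rho tau t i then (1 : R) else 0.
have w0 : forall i, 0 <= w i by move=> i; rewrite /w; case: ifP => _; lra.
have := @cover_gen R Gf (@Gf_mono R) _ (fun i => x i - rho i) (fun i => x i + rho i) w w0 0 1
   ltac:(lra).
rewrite Gf0 Gf1 subr0.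
have hc : covP R _ (fun i => x i - rho i) (fun i => x i + rho i) w 0 1.
  move=> u hu; have [i [hr [hu1 ht]]] := hcov u hu.
  rewrite (bigD1 i) //=.
  have -> : w i = 1 by rewrite /w /act hr ht.
  have : 0 <= \sum_(j | ((x j - rho j <= u) && (u <= x j + rho j)) && (j != i)) w j.
    by apply: sumr_ge0 => j _.
  lra.
move=> /(_ hc) H; apply: (le_trans H).
rewrite /tot [X in _ <= X]big_mkcond /=; apply: ler_sum => i _.
rewrite /w; case: ifP => ha.
- rewrite mul1r; apply: pos_le.
  + apply: interval_bound => //; by move: ha => /andP [/andP [-> _] _].
  + have := rr_ge (hx i); move: ha => /andP [/andP [hr _] _] h.
    apply: divr_ge0; lra.
- by rewrite mul0r.
Qed.

Lemma RR_ge0 x bb : instance x bb -> 0 <= RR x bb.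
Proof.
move=> [hx [_ hb]]; apply: sumr_ge0 => i _.
have := rr_ge (hx i); have : 0 <= ratr (bb i) :> R by rewrite ler0q.
move=> h1 h2; apply: divr_ge0; lra.
Qed.

Lemma time_bound x bb rho tau T : instance x bb -> schedule rho tau -> 0 <= T ->
  covers_upto x bb rho tau T -> T <= 3/2 * RR x bb.
Proof.
move=> hinst [hr ht] hT hcov.
have [hx [_ hb]] := hinst.
pose e i := tau i + ratr (bb i) / rho i.
pose w i := if 0 < rho i then 3/2 * (rho i / rr x i) else 0.
have w0 : forall i, 0 <= w i.
  move=> i; rewrite /w; case: ifP => h //.
  have := rr_ge (hx i) => h'; apply: mulr_ge0; [lra| apply: divr_ge0; lra].
have := @cover_gen R (fun s => s) (fun s t h => h) _ tau e w w0 0 T hT.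
have hc : covP R _ tau e w 0 T.
  move=> t htT.
  have hs := @static x bb rho tau t hx (fun u hu => hcov u t hu htT).
  have -> : \sum_(i | (tau i <= t) && (t <= e i)) w i =
            3/2 * \sum_(i | act x bb rho tau t i) rho i / rr x i.
    rewrite mulr_sumr big_mkcond [RHS]big_mkcond /=; apply: eq_bigr => i _.
    rewrite /w /act /e.
    case: (0 < rho i); case: (tau i <= t); case: (t <= tau i + ratr (bb i) / rho i) => //=;
      by rewrite mulr0.
  lra.
move=> /(_ hc); rewrite subr0 => H; apply: (le_trans H).
rewrite /tot /RR mulr_sumr; apply: ler_sum => i _; rewrite /w; case: ifP => hp.
- have hbi : 0 <= ratr (bb i) :> R by rewrite ler0q.
  have hbr : 0 <= ratr (bb i) / rho i by apply: divr_ge0; lra.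
  have hpos : pos (Num.min (e i) T - Num.max (tau i) 0) <= ratr (bb i) / rho i.
    apply: pos_le => //.
    have := ht i; rewrite /e.
    case: (lerP (tau i + ratr (bb i) / rho i) T) => ?; case: (lerP 0 (tau i)) => ?; lra.
  have hri := rr_ge (hx i).
  have hw : 0 <= 3/2 * (rho i / rr x i) by apply: mulr_ge0; [lra| apply: divr_ge0; lra].
  apply: (le_trans (ler_wpM2l hw hpos)).
  have -> : 3 / 2 * (rho i / rr x i) * (ratr (bb i) / rho i) = 3/2 * (ratr (bb i) / rr x i).
    by field; apply/andP; split; apply/negP => /eqP ?; lra.
  done.
- rewrite mul0r; have hbi : 0 <= ratr (bb i) :> R by rewrite ler0q.
  have hri := rr_ge (hx i).
  apply: mulr_ge0; [lra | apply: divr_ge0; lra].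
Qed.

Lemma sup_le_of (E : set R) c : 0 <= c -> (forall y, E y -> y <= c) -> sup E <= c.
Proof.
move=> c0 hE; have [[y Ey]|E0] := pselect (exists y, E y).
- by apply: ge_sup => //; exists y.
- have -> : E = set0.
    by apply/seteqP; split => y hy //; exfalso; apply: E0; exists y.
  by rewrite sup0.
Qed.

Lemma sup_eq (E : set R) c : E c -> (forall y, E y -> y <= c) -> sup E = c.
Proof.
move=> Ec hE; apply/eqP; rewrite eq_le; apply/andP; split.
- by apply: ge_sup => //; exists c.
- by apply: sup_upper_bound => //; split; [exists c | exists c].
Qed.

Definition ff x bb (i : 'I_n) : R := ratr (bb i) / rr x i.

Lemma ff_ge0 x bb i : instance x bb -> 0 <= ff x bb i.
Proof.
move=> [hx [_ hb]]; have := rr_ge (hx i); have : 0 <= ratr (bb i) :> R by rewrite ler0q.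
move=> h1 h2; apply: divr_ge0; lra.
Qed.

Lemma tau_S x bb (i : 'I_n) (h : (i.+1 < n)%N) :
  rr_tau x bb (Ordinal h) = rr_tau x bb i + ff x bb i.
Proof.
rewrite /rr_tau (bigD1 i) /=; last by rewrite ltnSn.
rewrite addrC; congr (_ + _); apply: eq_bigl => j.
by rewrite ltnS andbC ltn_neqAle val_eqE.
Qed.

Lemma tau_0 x bb (i : 'I_n) : nat_of_ord i = 0%N -> rr_tau x bb i = 0.
Proof. by move=> h; rewrite /rr_tau big_pred0 // => j; rewrite h ltn0. Qed.

Lemma RR_last x bb (h : (n.-1 < n)%N) :
  RR x bb = rr_tau x bb (Ordinal h) + ff x bb (Ordinal h).
Proof.
rewrite /RR (bigD1 (Ordinal h)) //= addrC; congr (_ + _).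
apply: eq_bigl => j; rewrite ltn_neqAle val_eqE /=.
have hj : (j <= n.-1)%N by rewrite -ltnS (ltn_predK (ltn_ord j)).
by rewrite hj andbT.
Qed.

Lemma tau_le x bb i : instance x bb -> rr_tau x bb i + ff x bb i <= RR x bb.
Proof.
move=> hi; rewrite /RR (bigID (fun j : 'I_n => (j < i)%N)) /=.
rewrite lerD2l (bigD1 i) /=; last by rewrite ltnn.
rewrite /ff lerDl; apply: sumr_ge0 => j _; exact: ff_ge0.
Qed.

Lemma sup_empty (E : set R) : (forall y, ~ E y) -> sup E = 0.
Proof.
move=> hE; have -> : E = set0 by apply/seteqP; split => y hy //; exfalso; exact: hE hy.
by rewrite sup0.
Qed.

Lemma RR_covers x bb : (0 < n)%N -> instance x bb ->
  covers_upto x bb (rr x) (rr_tau x bb) (RR x bb).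
Proof.
move=> hn hinst u t hu ht.
have [hx _] := hinst.
case: (boolP [exists i, (rr_tau x bb i <= t) && (t <= rr_tau x bb i + ff x bb i)]).
- move/existsP => [i /andP [h1 h2]]; exists i.
  have hr := rr_ge (hx i).
  split; first lra.
  split.
  + move: (hx i) hu => /andP [? ?] /andP [? ?].
    rewrite /rr; case: (lerP (x i) (1 - x i)) => ?; apply/andP; split; lra.
  + by apply/andP; split.
- rewrite negb_exists => /forallP hno; exfalso.
  have key : forall k (hk : (k < n)%N), rr_tau x bb (Ordinal hk) <= t.
    elim=> [|k IH] hk.
    + by rewrite tau_0 //; move: ht => /andP [].
    + have hk' : (k < n)%N by apply: ltnW.
      have := IH hk'; have := hno (Ordinal hk').
      rewrite (@tau_S x bb (Ordinal hk') hk) => H1 H2.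
      move: H1; rewrite H2 /= -ltNge => H1; lra.
  have hl : (n.-1 < n)%N by rewrite ltn_predL.
  have := key _ hl; have := hno (Ordinal hl).
  move: ht => /andP [_ ht].
  rewrite (RR_last x bb hl) in ht.
  move=> H1 H2; move: H1; rewrite H2 /= -ltNge => H1; lra.
Qed.

Lemma lifetime_RR x bb : instance x bb -> lifetime x bb (rr x) (rr_tau x bb) = RR x bb.
Proof.
move=> hinst; rewrite /lifetime.
case: (posnP n) => hn.
- have -> : RR x bb = 0.
    by apply: big1 => -[k hk] _; exfalso; move: hk; rewrite hn.
  apply: sup_empty => y [hy H].
  have [i _] := H 0 0 ltac:(apply/andP; split; lra) ltac:(apply/andP; split; lra).
  by case: i => k; rewrite hn.
- apply: sup_eq.
  + by split; [exact: RR_ge0 | exact: RR_covers].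
  + move=> T [hT H].
    have [i [_ [_ /andP [_ h2]]]] := H 0 T ltac:(apply/andP; split; lra) ltac:(apply/andP; split; lra).
    have := @tau_le x bb i hinst; rewrite /ff; lra.
Qed.
End Main.

Theorem theorem2 (R : realType) (n : nat) (x : 'I_n -> R) (b : 'I_n -> rat) :
  instance x b ->
  schedule (rr x) (rr_tau x b) /\
  lifetime x b (rr x) (rr_tau x b) = RR x b /\
  RR x b >= 2 / 3 * Opt x b.
Proof.
move=> hinst; have [hx [_ hb]] := hinst.
split; [|split].
- split => i.
  + have := @rr_ge R n x i (hx i) => /andP [h1 h2]; apply/andP; split; lra.
  + rewrite /rr_tau; apply: sumr_ge0 => j _; exact: ff_ge0.
- exact: lifetime_RR.
- have hRR := @RR_ge0 R n x b hinst.
  have : Opt x b <= 3/2 * RR x b.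
    apply: sup_le_of; first lra.
    move=> L [rho [tau [hs ->]]].
    apply: sup_le_of; first lra.
    move=> T [hT H]; exact: (@time_bound R n x b rho tau T hinst hs hT H).
  lra.
Qed.
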